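(* Let $f\in L^2(\rho_X)$ satisfy $\|f-\eta\|_{L^2(\rho_X)}\le\varepsilon$ for some $\varepsilon>0$. Then: (i) If $\eta$ satisfies the low-noise condition, i.e. there are $q>0$, $C>0$ with $\mathbb P(|\eta(X)|\le\delta)\le C\delta^q$ for all $\delta>0$, then for all $\delta>\varepsilon$ and $0<\nu<\delta$, \[\mathbb P(|f(X)|\le\nu)\le\frac{\varepsilon^2}{(\delta-\nu)^2}+C\delta^q.\] (ii) If $\eta$ satisfies the hard-margin condition $\mathbb P(|\eta(X)|>\delta)=1$ for some $\delta>0$, and $\varepsilon<\delta$, then for all $\nu<\delta$, \[\mathbb P(|f(X)|\le\nu)\le\frac{\varepsilon^2}{(\delta-\nu)^2}.\]
   Context: $\mathcal X=[0,1]^d$, $\rho$ is a probability distribution on $\mathcal X\times\{-1,1\}$ with $X$-marginal $\rho_X$, $(X,Y)\sim\rho$, and $\eta(x)=\mathbb E[Y\mid X=x]$. *)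

(* Defs.v *)
From HB Require Import structures.
From mathcomp Require Import all_boot all_order all_algebra.
From mathcomp Require Import all_classical all_reals all_analysis.
Set Implicit Arguments. Unset Strict Implicit. Unset Printing Implicit Defensive.
Import Order.TTheory GRing.Theory Num.Theory.
Local Open Scope classical_set_scope.
Local Open Scope ring_scope.

Definition cube (R : realType) (d : nat) : set (d.-tuple R) :=
  [set x | forall i : 'I_d, 0 <= tnth x i <= 1].

Definition labels (R : realType) : set R := [set y | y = -1 \/ y = 1].

Definition projX (R : realType) (d : nat) : d.-tuple R * R -> d.-tuple R := fst.

HB.instance Definition _ (R : realType) (d : nat) :=
  isMeasurableFun.Build _ _ _ _ (@projX R d) measurable_fst.

Definition marginalX (R : realType) (d : nat)
  (rho : probability (d.-tuple R * R)%type R) :=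
  distribution rho (@projX R d).

Definition supported_on_cube_labels (R : realType) (d : nat)
  (rho : probability (d.-tuple R * R)%type R) : Prop :=
  rho (@cube R d `*` @labels R) = 1%:E.

(* eta is (a version of) the regression function E[Y | X = x]:
   measurable, rho_X-integrable, and for every measurable A,
   E[Y 1_{X in A}] = \int_A eta d rho_X. *)
Definition is_regression_function (R : realType) (d : nat)
  (rho : probability (d.-tuple R * R)%type R) (eta : d.-tuple R -> R) : Prop :=
  measurable_fun setT eta /\
  (marginalX rho).-integrable setT (fun x => (eta x)%:E) /\
  forall A : set (d.-tuple R), measurable A ->
    (\int[rho]_(z in A `*` setT) (z.2)%:E
     = \int[marginalX rho]_(x in A) (eta x)%:E)%E.

Definition in_L2 (R : realType) (d : nat)
  (rho : probability (d.-tuple R * R)%type R) (f : d.-tuple R -> R) : Prop :=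
  measurable_fun setT f /\
  (\int[marginalX rho]_x ((f x) ^+ 2)%:E < +oo)%E.

(* Main.v *)
Require Import Defs.
From HB Require Import structures.
From mathcomp Require Import all_boot all_order all_algebra.
From mathcomp Require Import all_classical all_reals all_analysis.
From mathcomp Require Import measurable_realfun.
From mathcomp Require Import lra.
Import Order.TTheory GRing.Theory Num.Theory.
Local Open Scope classical_set_scope.
Local Open Scope ring_scope.

Lemma cheb dd (T : measurableType dd) (R : realType) (mu : probability T R)
  (g : T -> R) (eps t : R) : measurable_fun setT g -> 0 < t ->
  (Lnorm mu 2%:E (fun x => (g x)%:E) <= eps%:E)%E ->
  (mu [set x | (t <= `|g x|)%R] <= (eps ^+ 2 / t ^+ 2)%:E)%E.
Proof.
move=> mg t0 hN.
pose sq := fun r : R => (r ^+ 2)%R.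
have h2 : ((t ^+ 2)%:E * mu [set x | (t <= `|g x|)%R]
    <= \int[mu]_x er_map sq `|(g x)%:E|)%E.
  have -> : [set x | (t <= `|g x|)%R] = setT `&` [set x | (t%:E <= `|(EFin \o g) x|)%E].
    by rewrite setTI; apply/seteqP; split => x /=; rewrite lee_fin.
  apply: (le_integral_comp_abse _ _ _ _ _ (proj2 (measurable_EFinP _ _) mg) t0) => //.
  - exact: (@measurable_er_map _ T R _ (@exprn_measurable R setT 2)).
  - by case => //= r _; rewrite lee_fin /sq sqr_ge0.
  - move=> [x| |] [y| |]; rewrite !inE/= !in_itv/= ?andbT ?lee_fin ?leey//.
    by move=> ? ? ?; rewrite /sq ler_sqr.
have h3 : (\int[mu]_x er_map sq `|(g x)%:E| <= (eps ^+ 2)%:E)%E.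
  have -> : (\int[mu]_x er_map sq `|(g x)%:E|)%E
     = (Lnorm mu 2%:E (fun x => (g x)%:E) `^ 2)%E.
    rewrite poweR_Lnorm ?pnatr_eq0//; apply: eq_integral => x _.
    by rewrite /= powR_mulrn // normr_ge0.
  have e0 : 0 <= eps.
    by rewrite -lee_fin (le_trans _ hN)// Lnorm_ge0.
  rewrite -(powR_mulrn 2 e0) -poweR_EFin.
  apply: gt0_ler_poweR => //; rewrite in_itv /= leey andbT ?Lnorm_ge0 // lee_fin.
rewrite mulrC EFinM lee_pdivlMl ?exprn_gt0//.
exact: le_trans h2 h3.
Qed.

Lemma meas_le dd (T : measurableType dd) (R : realType) (h : T -> R) (a : R) :
  measurable_fun setT h -> measurable [set x | `|h x| <= a].
Proof.
move=> mh.
have mn : measurable_fun setT (fun x => `|h x|) by exact: measurableT_comp.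
have := mn measurableT _ (measurable_itv `]-oo, a]); rewrite setTI.
congr measurable; apply/seteqP; split => x /=; rewrite in_itv /= //.
Qed.

Lemma meas_ge dd (T : measurableType dd) (R : realType) (h : T -> R) (a : R) :
  measurable_fun setT h -> measurable [set x | a <= `|h x|].
Proof.
move=> mh.
have mn : measurable_fun setT (fun x => `|h x|) by exact: measurableT_comp.
have := mn measurableT _ (measurable_itv `[a, +oo[); rewrite setTI.
congr measurable; apply/seteqP; split => x /=; rewrite in_itv /= andbT //.
Qed.

Lemma meas_gt dd (T : measurableType dd) (R : realType) (h : T -> R) (a : R) :
  measurable_fun setT h -> measurable [set x | a < `|h x|].
Proof.
move=> mh.
have mn : measurable_fun setT (fun x => `|h x|) by exact: measurableT_comp.
have := mn measurableT _ (measurable_itv `]a, +oo[); rewrite setTI.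
congr measurable; apply/seteqP; split => x /=; rewrite in_itv /= andbT //.
Qed.

Theorem lemma8 (R : realType) (d : nat)
  (rho : probability (d.-tuple R * R)%type R)
  (eta f : d.-tuple R -> R) (eps : R) :
  supported_on_cube_labels rho ->
  is_regression_function rho eta ->
  in_L2 rho f ->
  0 < eps ->
  (Lnorm (marginalX rho) 2%:E (fun x => (f x - eta x)%:E) <= eps%:E)%E ->
  (* (i) low-noise condition *)
  (forall q C : R, 0 < q -> 0 < C ->
     (forall delta : R, 0 < delta ->
        (marginalX rho [set x | (`|eta x| <= delta)%R] <= (C * delta `^ q)%:E)%E) ->
     forall delta nu : R, eps < delta -> 0 < nu -> nu < delta ->
       (marginalX rho [set x | (`|f x| <= nu)%R]
        <= (eps ^+ 2 / (delta - nu) ^+ 2 + C * delta `^ q)%:E)%E)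
  /\
  (* (ii) hard-margin condition *)
  (forall delta : R, 0 < delta ->
     marginalX rho [set x | (delta < `|eta x|)%R] = 1%:E ->
     eps < delta ->
     forall nu : R, nu < delta ->
       (marginalX rho [set x | (`|f x| <= nu)%R]
        <= (eps ^+ 2 / (delta - nu) ^+ 2)%:E)%E).
Proof.
move=> _ [meta _] [mf _] e0 hN.
set mu := marginalX rho.
have mg : measurable_fun setT (fun x => f x - eta x) by exact: measurable_funB.
have key := @cheb _ _ _ (marginalX rho) _ _ _ mg ^~ hN.
have sub : forall delta nu, nu < delta ->
    [set x | `|f x| <= nu] `<=` [set x | delta - nu <= `|f x - eta x|] `|` [set x | `|eta x| <= delta].
  move=> delta nu _ x /= hx.
  have [he|he] := leP `|eta x| delta; [by right|left].
  have := ler_normB (f x) (f x - eta x).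
  rewrite opprB addrC subrK => h.
  lra.
split.
- move=> q C q0 C0 hlow delta nu ed n0 nd.
  apply: (le_trans (le_measure _ _ _ (sub delta nu nd))).
  + by rewrite inE; exact: meas_le.
  + by rewrite inE; apply: measurableU; [exact: meas_ge|exact: meas_le].
  apply: (le_trans (measureU2 _ _ _)); [exact: meas_ge|exact: meas_le|].
  rewrite EFinD; apply: leeD.
  + by apply: key; rewrite subr_gt0.
  + by apply: hlow; lra.
- move=> delta d0 hm ed nu nd.
  have h0 : mu [set x | `|eta x| <= delta] = 0%E.
    have -> : [set x | `|eta x| <= delta] = ~` [set x | delta < `|eta x|].
      by apply/seteqP; split => x /=; rewrite leNgt => /negP.
    have hm' : (marginalX rho : probability _ R) [set x | delta < `|eta x|] = 1%E := hm.
    apply: (eq_trans (@probability_setC _ _ _ (marginalX rho) _ (@meas_gt _ _ _ eta delta meta))).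
    by rewrite hm' subee.
  apply: (le_trans (le_measure _ _ _ (sub delta nu nd))).
  + by rewrite inE; exact: meas_le.
  + by rewrite inE; apply: measurableU; [exact: meas_ge|exact: meas_le].
  apply: (le_trans (measureU2 _ _ _)); [exact: meas_ge|exact: meas_le|].
  have hk : delta - nu > 0 by rewrite subr_gt0.
  have h0le : (mu [set x | (`|eta x| <= delta)%R] <= 0)%E by rewrite h0.
  apply: (le_trans (leeD (key _ hk) h0le)).
  by rewrite adde0.
Qed.
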